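(* If $n \ge m \ge 2$, then $\mathrm{sg_e}(K_{n,m}) \ge n$. Moreover, $\mathrm{sg_e}(K_{n,n}) \ge n+1$ for every $n\ge 2$.
   Context: All graphs are finite, simple and connected. A set $S \subseteq V(G)$ is a strong edge geodetic set of $G$ if one can assign to every unordered pair $\{u,v\}$ of distinct vertices of $S$ either one shortest $u,v$-path $P_{uv}$ in $G$ or no path, in such a way that every edge of $G$ lies on at least one of the assigned paths. The strong edge geodetic number $\mathrm{sg_e}(G)$ is the minimum cardinality of a strong edge geodetic set of $G$. $K_{n,m}$ denotes the complete bipartite graph with parts of sizes $n$ and $m$. *)

(* Defs.v *)
From mathcomp Require Import all_boot all_order.
From Stdlib Require Import ClassicalEpsilon.
Set Implicit Arguments. Unset Strict Implicit. Unset Printing Implicit Defensive.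

Section Graph.
Variables (T : finType) (e : rel T).

Definition walk (u v : T) (p : seq T) : bool := path e u p && (last u p == v).

Definition shortest_path (u v : T) (p : seq T) : Prop :=
  walk u v p /\ forall q, walk u v q -> size p <= size q.

Definition edge_on (x y u : T) (p : seq T) : bool :=
  has (fun ab => (ab == (x, y)) || (ab == (y, x))) (zip (u :: p) p).

(* Unordered pairs {u,v} of distinct vertices are represented by the ordered
   pair (u,v) with enum_rank u < enum_rank v.  An assignment gives to each such
   pair either one shortest u,v-path (Some p) or no path (None). *)
Definition strong_edge_geodetic (S : {set T}) : Prop :=
  exists f : T -> T -> option (seq T),
    (forall u v p, u \in S -> v \in S -> enum_rank u < enum_rank v ->
       f u v = Some p -> shortest_path u v p) /\
    (forall x y, e x y -> exists u v p,
       [/\ u \in S, v \in S, enum_rank u < enum_rank v,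
           f u v = Some p & edge_on x y u p]).

Definition strong_edge_geodeticb (S : {set T}) : bool :=
  if excluded_middle_informative (strong_edge_geodetic S) then true else false.

Definition sg_e : nat :=
  #|[arg min_(S < [set: T] | strong_edge_geodeticb S) #|S|]|.
End Graph.

Definition Kbip (n m : nat) : rel ('I_n + 'I_m)%type :=
  fun x y => match x, y with
             | inl _, inr _ | inr _, inl _ => true
             | _, _ => false
             end.
Arguments Kbip : clear implicits.

(* Main.v *)
Require Import Defs.
From mathcomp Require Import all_boot.
From Stdlib Require Import ClassicalEpsilon.
From mathcomp Require Import zify.

Section Gen.
Variables (T : finType) (P : {set T}) (e : rel T).
Hypothesis he : forall x y, e x y = ((x \in P) != (y \in P)).
Variables (a0 b0 : T).
Hypothesis Pa0 : a0 \in P.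
Hypothesis Pb0 : b0 \notin P.

Lemma sp_shape u v p : u != v -> shortest_path e u v p ->
  (p = [:: v]) \/ (exists c, p = [:: c; v] /\ e u c /\ e c v).
Proof.
move=> neq [/andP[pth /eqP lst] Hmin].
have Hle : size p <= 2.
  case euv: (e u v).
    apply: leq_trans (Hmin [:: v] _) _ => //.
    by rewrite /walk /= euv /=.
  set w := if u \in P then b0 else a0.
  apply: (Hmin [:: w; v]).
  rewrite /walk /= eqxx andbT.
  move: euv; rewrite !he /w.
  by case: (u \in P); case: (v \in P) => //=; rewrite ?Pa0 ?(negbTE Pb0).
case: p pth lst Hle Hmin => [|c [|d [|? ?]]] //=.
- by move=> _ E; rewrite E eqxx in neq.
- by move=> _ -> _ _; left.
- move=> /andP[euc /andP[ecd _]] E _ _; subst d; right; exists c; auto.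
Qed.

Definition pr (y z : T) := if enum_rank y < enum_rank z then (y, z) else (z, y).

Lemma key S : strong_edge_geodetic e S -> #|S :&: P| < #|P| ->
  #|P| < #|S :&: P| + #|S :&: ~: P|.
Proof.
move=> [f [Hf Hcov]] Hlt.
set X := P :\: S. set B := ~: P. set C := S :&: ~: P.
pose Good x y z := (f (pr y z).1 (pr y z).2 == Some [:: x; (pr y z).2])
                    && (z \in C) && (z != y).
have claim : forall x y, x \in X -> y \in B -> y \in C /\ exists z, Good x y z.
  move=> x y; rewrite !inE => /andP[xS xP] yP.
  have exy : e x y by rewrite he xP yP.
  have [u [v [p [uS vS ruv fuv eon]]]] := Hcov x y exy.
  have neq : u != v by apply/eqP => E; rewrite E ltnn in ruv.
  have sp := Hf u v p uS vS ruv fuv.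
  have [pE | [c [pE [euc ecv]]]] := @sp_shape u v _ neq sp; subst p.
    move: eon; rewrite /edge_on /= orbF => /orP[] /eqP [] E1 E2; subst.
    - by rewrite uS in xS.
    - by rewrite vS in xS.
  move: eon; rewrite /edge_on /= orbF => /orP[/orP[]|/orP[]] /eqP [] E1 E2; subst.
  - by rewrite uS in xS.
  -
    split; first by rewrite uS yP.
    exists v; rewrite /Good /pr ruv /= fuv eqxx /= !inE vS eq_sym neq /=.
    by move: ecv; rewrite he xP; case: (v \in P).
  - split; first by rewrite vS yP.
    exists u; rewrite /Good /pr ltnNge (ltnW ruv) /= fuv eqxx /= !inE uS neq /=.
    by move: euc; rewrite he xP; case: (u \in P).
  - by rewrite vS in xS.
pose g (xy : T * T) := (xy.2, odflt xy.2 [pick z | Good xy.1 xy.2 z]).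
have gP : forall x y, x \in X -> y \in B -> Good x y (g (x, y)).2.
  move=> x y xX yB; rewrite /g /=.
  case: pickP => [z //|no]; have [_ [z Gz]] := claim x y xX yB.
  by rewrite no in Gz.
set D := setX X B.
have inj : {in D &, injective g}.
  move=> [x y] [x' y']; rewrite /D !in_setX => /andP[xX yB] /andP[x'X y'B] E.
  have G1 := gP x y xX yB. have G2 := gP x' y' x'X y'B.
  rewrite -E in G2. move: E; rewrite /g /= => -[E1 _]; subst y'.
  move: G1 G2; rewrite /Good.
  move=> /andP[/andP[/eqP -> _] _] /andP[/andP[/eqP [->] _] _].
  done.
have sub : g @: D \proper setX C C.
  apply/properP; split.
    apply/subsetP => _ /imsetP[[x y] xyD ->].
    move: xyD; rewrite /D in_setX => /andP[xX yB].
    have [yC _] := claim x y xX yB.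
    have /andP[/andP[_ zC] _] := gP x y xX yB.
    by rewrite in_setX yC.
  have [x1 x1X] : exists x1, x1 \in X.
    apply/set0Pn; rewrite -card_gt0.
    have := cardsID S P. rewrite setIC /X. lia.
  have b0B : b0 \in B by rewrite inE.
  have [b0C _] := claim x1 b0 x1X b0B.
  exists (b0, b0); first by rewrite in_setX b0C.
  apply/imsetP => -[[x y] xyD E].
  move: xyD; rewrite /D in_setX => /andP[xX yB].
  have /andP[_ ne] := gP x y xX yB.
  have E1 := f_equal fst E; simpl in E1; subst y.
  by move: ne; rewrite -[g (x, b0)]E eqxx.
have := proper_card sub.
rewrite card_in_imset // !cardsX => H.
have CB : #|C| <= #|B| by apply: subset_leq_card; rewrite /C subsetIr.
have XC : #|X| < #|C|.
  have : #|X| * #|B| < #|C| * #|B| by apply: (leq_trans H); rewrite leq_mul2l CB orbT.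
  rewrite ltn_mul2r => /andP[]; done.
have := cardsID S P. rewrite setIC /X in XC *. lia.
Qed.
End Gen.

Section K.
Variables n m : nat.
Hypotheses (n0 : 0 < n) (m0 : 0 < m).
Let T := ('I_n + 'I_m)%type.
Definition PL : {set T} := inl @: [set: 'I_n].

Lemma inPL_l i : (inl i : T) \in PL.
Proof. by apply: imset_f. Qed.
Lemma inPL_r j : (inr j : T) \notin PL.
Proof. by apply/imsetP => -[]. Qed.

Lemma heK : forall x y : T, Kbip n m x y = ((x \in PL) != (y \in PL)).
Proof.
by move=> [i|j] [i'|j']; rewrite /= ?inPL_l ?(negbTE (inPL_r _)).
Qed.

Lemma heK' : forall x y : T, Kbip n m x y = ((x \in ~: PL) != (y \in ~: PL)).
Proof. by move=> x y; rewrite heK !inE; case: (x \in PL); case: (y \in PL). Qed.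

Lemma cardPL : #|PL| = n.
Proof. by rewrite card_imset ?cardsT ?card_ord //; apply: inl_inj. Qed.

Lemma cardPLC : #|~: PL| = m.
Proof.
have := cardsC PL; rewrite cardPL card_sum !card_ord; lia.
Qed.

Lemma bounds S : strong_edge_geodetic (Kbip n m) S ->
  [/\ #|S| = #|S :&: PL| + #|S :&: ~: PL|,
      #|S :&: PL| < n -> n < #|S|
    & #|S :&: ~: PL| < m -> m < #|S|].
Proof.
move=> HS.
have Ea : #|S| = #|S :&: PL| + #|S :&: ~: PL| by rewrite -setDE cardsID.
have a0P : (inl (Ordinal n0) : T) \in PL by apply: inPL_l.
have b0P : (inr (Ordinal m0) : T) \notin PL by apply: inPL_r.
split => //.
- move=> H. have K := @key _ _ _ heK _ _ a0P b0P _ HS. rewrite cardPL in K.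
  by rewrite Ea; apply: K.
- move=> H.
  have a0P' : (inr (Ordinal m0) : T) \in ~: PL by rewrite inE.
  have b0P' : (inl (Ordinal n0) : T) \notin ~: PL by rewrite inE negbK.
  have K := @key _ _ _ heK' _ _ a0P' b0P' _ HS. rewrite setCK cardPLC addnC in K.
  by rewrite Ea; apply: K.
Qed.

Lemma sg_bound (Q : nat -> Prop) :
  (forall S, strong_edge_geodetic (Kbip n m) S -> Q #|S|) -> Q (n + m) ->
  Q (sg_e (Kbip n m)).
Proof.
move=> HS Hall; rewrite /sg_e /arg_min /extremum.
case: pickP => [S /andP[PS _] | _] /=.
  apply: HS; move: PS; rewrite /strong_edge_geodeticb.
  by case: excluded_middle_informative.
by rewrite cardsT card_sum !card_ord.
Qed.
End K.

Theorem mainTheorem4 :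
  (forall n m : nat, 2 <= m -> m <= n -> n <= sg_e (Kbip n m)) /\
  (forall n : nat, 2 <= n -> n.+1 <= sg_e (Kbip n n)).
Proof.
split.
- move=> n m m2 mn.
  have n0 : 0 < n by lia. have m0 : 0 < m by lia.
  apply: (@sg_bound n m (fun k => n <= k)); last by lia.
  move=> S HS; have [E Ha Hb] := @bounds n m n0 m0 S HS.
  case: (ltnP #|S :&: PL n m| n) => H; first by have := Ha H; lia.
  lia.
- move=> n n2.
  have n0 : 0 < n by lia.
  apply: (@sg_bound n n (fun k => n < k)); last by lia.
  move=> S HS; have [E Ha Hb] := @bounds n n n0 n0 S HS.
  case: (ltnP #|S :&: PL n n| n) => H; first exact: Ha.
  case: (ltnP #|S :&: ~: PL n n| n) => H'; first exact: Hb.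
  lia.
Qed.
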